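(* Let $\mathbf{m}\in\mathbb{R}^{kn\times kn}$ be diagonal with strictly positive diagonal and let $b_n=(\mathbf{x}'\mathbf{m}\pi\mathbf{x})^{+}\mathbf{x}'\mathbf{m}\pi y$. If there exists $\mathbf{t}\in\mathbb{R}^{(k+p)\times k}$ with $\mathbf{x}\mathbf{t}=\mathbf{m}^{-1}\pi^{-1}\mathbf{1}$ (i.e. every column of $\mathbf{m}^{-1}\pi^{-1}\mathbf{1}$ lies in the column space of $\mathbf{x}$), then $$\frac1n\mathbf{1}'\mathbf{x}b_n=\frac1n\mathbf{1}'y,$$ i.e. the probability limit of the completely imputed (and WLS) estimator equals the vector of average potential outcomes.
   Context: $k$ arms, $n$ units, $p$ covariates. $y\in\mathbb{R}^{kn}$ stacks the potential outcome vectors of the $k$ arms. $\pi\in\mathbb{R}^{kn\times kn}$ is the diagonal matrix of assignment probabilities $\pi_{ai}\in(0,1)$ (ordered arm by arm). $\mathbf{1}=I_k\otimes1_n\in\mathbb{R}^{kn\times k}$. With covariate matrix $X\in\mathbb{R}^{n\times p}$, $\mathbf{x}=[\mathbf{1}\mid1_k\otimes X]\in\mathbb{R}^{kn\times(k+p)}$. $A^+$ is the Moore–Penrose inverse. *)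

(* Defs.v *)
From HB Require Import structures.
From mathcomp Require Import all_boot all_order all_algebra.
Set Implicit Arguments. Unset Strict Implicit. Unset Printing Implicit Defensive.
Import Order.TTheory GRing.Theory Num.Theory.
Local Open Scope ring_scope.

(* Row index r : 'I_(k*n) of a stacked vector encodes (arm a, unit i)
   with r = a * n + i (arm-by-arm ordering). *)
Lemma arm_lt (k n : nat) (r : 'I_(k * n)) : (r %/ n < k)%N.
Proof.
case: n r => [|n] r; first by case: r => r; rewrite muln0.
by rewrite ltn_divLR // ltn_ord.
Qed.

Lemma unit_lt (k n : nat) (r : 'I_(k * n)) : (r %% n < n)%N.
Proof.
case: n r => [|n] r; first by case: r => r; rewrite muln0.
by rewrite ltn_pmod.
Qed.

Definition arm_of (k n : nat) (r : 'I_(k * n)) : 'I_k := Ordinal (arm_lt r).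
Definition unit_of (k n : nat) (r : 'I_(k * n)) : 'I_n := Ordinal (unit_lt r).

(* bold 1 = I_k (x) 1_n *)
Definition onesmx (R : nzRingType) (k n : nat) : 'M[R]_(k * n, k) :=
  \matrix_(r, b) (arm_of r == b)%:R.

(* bold x = [ 1 | 1_k (x) X ] *)
Definition xmat (R : nzRingType) (k n p : nat) (X : 'M[R]_(n, p))
  : 'M[R]_(k * n, k + p) :=
  row_mx (onesmx R k n) (\matrix_(r, j) X (unit_of r) j).

Definition is_MP_inverse (R : nzRingType) (m n : nat)
  (A : 'M[R]_(m, n)) (B : 'M[R]_(n, m)) : Prop :=
  [/\ A *m B *m A = A, B *m A *m B = B,
      (A *m B)^T = A *m B & (B *m A)^T = B *m A].

(* Main.v *)
Require Import Defs.
From HB Require Import structures.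
From mathcomp Require Import all_boot all_order all_algebra.
Import Order.TTheory GRing.Theory Num.Theory.
Local Open Scope ring_scope.

Lemma diag_pos_zero (R : realFieldType) m q (w : 'rV[R]_m) (u : 'M[R]_(m, q)) :
  (forall r, 0 < w 0 r) -> u^T *m diag_mx w *m u = 0 -> u = 0.
Proof.
move=> Hw H; apply/matrixP => r i.
have := congr1 (fun M : 'M_q => M i i) H.
rewrite mul_mx_diag !mxE.
under eq_bigr do rewrite !mxE.
move=> /psumr_eq0P Hs.
have /Hs : forall j, true -> 0 <= u j i * w 0 j * u j i.
  move=> j _; rewrite mulrAC -expr2 mulr_ge0 ?sqr_ge0 //; exact: ltW.
move=> /(_ r isT) /eqP.
by rewrite -mulrA mulf_eq0 mulf_eq0 (gt_eqF (Hw r)) /= orbb => /eqP.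
Qed.

Lemma diag_unit (R : realFieldType) m (w : 'rV[R]_m) :
  (forall r, 0 < w 0 r) -> diag_mx w \in unitmx.
Proof.
move=> Hw; rewrite unitmxE det_diag unitfE; apply/prodf_neq0 => r _.
by rewrite lt0r_neq0.
Qed.

Theorem mainTheorem7 (R : realFieldType) (k n p : nat)
  (X : 'M[R]_(n, p)) (y : 'cV[R]_(k * n))
  (pid : 'rV[R]_(k * n)) (md : 'rV[R]_(k * n))
  (Hpi : forall r, 0 < pid 0 r < 1)
  (Hm : forall r, 0 < md 0 r)
  (B : 'M[R]_(k + p))
  (HB : is_MP_inverse
          ((xmat k X)^T *m diag_mx md *m diag_mx pid *m xmat k X) B) :
  (exists t : 'M[R]_(k + p, k),
      xmat k X *m t = invmx (diag_mx md) *m invmx (diag_mx pid) *m onesmx R k n) ->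
  let bn := B *m ((xmat k X)^T *m diag_mx md *m diag_mx pid *m y) in
  (n%:R)^-1 *: ((onesmx R k n)^T *m xmat k X *m bn)
    = (n%:R)^-1 *: ((onesmx R k n)^T *m y).
Proof.
move=> [t Ht] bn; rewrite /bn; clear bn.
have Hp : forall r, 0 < pid 0 r by move=> r; case/andP: (Hpi r).
have Um := @diag_unit _ _ md Hm; have Up := @diag_unit _ _ pid Hp.
set x := xmat k X in HB Ht *; set O := onesmx R k n in Ht *.
have HO : O = diag_mx md *m diag_mx pid *m x *m t.
  by rewrite -mulmxA Ht diag_mxC !mulmxA mulmxK // mulmxV // mul1mx.
case: HB => H1 H2 H3 H4.
rewrite -!(mulmxA x^T (diag_mx md)) mulmx_diag in H1 H2 H3 H4 HO *.
set wv := \row_j (md 0 j * pid 0 j) in H1 H2 H3 H4 HO *.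
have Hw : forall r, 0 < wv 0 r by move=> r; rewrite mxE mulr_gt0.
set W := diag_mx wv in H1 H2 H3 H4 HO *.
set A := x^T *m W *m x in H1 H2 H3 H4 *.
have T : (1%:M - A *m B)^T = 1%:M - A *m B.
  by rewrite linearB /= trmx1 H3.
set u := x *m (1%:M - A *m B).
have Hu : u = 0.
  apply: (@diag_pos_zero _ _ _ wv _ Hw).
  have key : (1%:M - A *m B) *m A *m (1%:M - A *m B) = 0.
    by rewrite mulmxBl mul1mx H1 subrr mul0mx.
  by rewrite -key /u trmx_mul T /A !mulmxA.
have HE : A *m B *m (x^T *m W) = x^T *m W.
  have : u^T *m W = 0 by rewrite Hu trmx0 mul0mx.
  rewrite /u trmx_mul T mulmxBl mul1mx mulmxBl -!mulmxA.
  by move/eqP; rewrite subr_eq0 eq_sym => /eqP.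
congr (_ *: _).
rewrite HO !trmx_mul tr_diag_mx -/W.
have -> : t^T *m (x^T *m W) *m x *m (B *m (x^T *m W *m y))
        = t^T *m (A *m B *m (x^T *m W) *m y) by rewrite /A !mulmxA.
by rewrite HE !mulmxA.
Qed.
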